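(* Let $X$ be a Banach space. Then the following are equivalent: (i) $X$ has weak normal structure; (ii) every orbitally Kannan mapping which diminishes the radius of orbits, defined on a weakly compact convex subset of $X$ into itself, has a (unique) fixed point.
   Context: For $x\in X$ and $A\subseteq X$, $r_x(A)=\sup\{\|x-y\|:y\in A\}$ and $\delta(A)$ is the diameter; $O_T(x)=\{x,Tx,T^2x,\dots\}$. A map $T:C\to C$ is orbitally Kannan if $\|Tx-Ty\|\le\frac12\big(r_x(O_T(x))+r_y(O_T(y))\big)$ for all $x,y\in C$, and diminishes the radius of orbits if $r_{Tx}(O_T(Tx))\le r_x(O_T(x))$ for all $x\in C$. $X$ has weak normal structure if every weakly compact convex subset $K$ of $X$ with more than one point has normal structure: for every closed convex $K_0\subseteq K$ with $\delta(K_0)>0$ there is $x_0\in K_0$ with $r_{x_0}(K_0)<\delta(K_0)$. *)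

(* Defs.v *)
From HB Require Import structures.
From mathcomp Require Import all_boot all_order all_algebra.
From mathcomp Require Import all_classical all_reals all_analysis.
From Stdlib Require List.
Set Implicit Arguments. Unset Strict Implicit. Unset Printing Implicit Defensive.
Import Order.TTheory GRing.Theory Num.Theory.
Import numFieldNormedType.Exports.
Local Open Scope classical_set_scope.
Local Open Scope ring_scope.

Section Defs.
Context {R : realType} {X : normedModType R}.

Definition rad (x : X) (A : set X) : R := sup [set `|x - y| | y in A].

Definition diam (A : set X) : R :=
  sup [set `|x - y| | x in A & y in A].

Definition orbit (T : X -> X) (x : X) : set X := range (fun n : nat => iter n T x).

Definition convex_set_of (A : set X) : Prop :=
  forall (x y : X) (t : R), A x -> A y -> 0 <= t -> t <= 1 -> A (t *: x + (1 - t) *: y).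

Definition dual_functional (f : X -> R) : Prop :=
  (forall (a : R) (x y : X), f (a *: x + y) = a * f x + f y) /\ continuous f.

Definition weak_open (U : set X) : Prop :=
  forall x, U x -> exists (fs : seq (X -> R)) (e : R),
    [/\ forall f, f \in fs -> dual_functional f, 0 < e &
        [set y | forall f, f \in fs -> `|f y - f x| < e] `<=` U].

Definition weakly_compact (K : set X) : Prop :=
  forall (I : Type) (U : I -> set X),
    (forall i, weak_open (U i)) -> K `<=` \bigcup_i U i ->
    exists s : seq I, K `<=` [set x | exists2 i, Stdlib.Lists.List.In i s & U i x].

Definition normal_structure (K : set X) : Prop :=
  forall K0 : set X, K0 `<=` K -> closed K0 -> convex_set_of K0 -> 0 < diam K0 ->
    exists2 x0, K0 x0 & rad x0 K0 < diam K0.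

Definition weak_normal_structure : Prop :=
  forall K : set X, weakly_compact K -> convex_set_of K ->
    (exists x y, [/\ K x, K y & x <> y]) -> normal_structure K.

Definition orbitally_Kannan (C : set X) (T : X -> X) : Prop :=
  forall x y, C x -> C y ->
    `|T x - T y| <= (rad x (orbit T x) + rad y (orbit T y)) / 2.

Definition diminishes_radius_of_orbits (C : set X) (T : X -> X) : Prop :=
  forall x, C x -> rad (T x) (orbit T (T x)) <= rad x (orbit T x).

End Defs.

(* Main.v *)
Require Import Defs.
From HB Require Import structures.
From mathcomp Require Import all_boot all_order all_algebra.
From mathcomp Require Import all_classical all_reals all_analysis.
From mathcomp Require Import lra ring.
Import Order.TTheory GRing.Theory Num.Theory.
Import numFieldNormedType.Exports.
Local Open Scope classical_set_scope.
Local Open Scope ring_scope.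
Require Import Defs.

Section S0. Context {R : realType} {X : normedModType R}.


Definition goodG (q : X -> R) (G : set (X * R)) :=
  [/\ forall x a b, G (x,a) -> G (x,b) -> a = b,
      forall t x a y b, G (x,a) -> G (y,b) -> G (t *: x + y, t * a + b) &
      forall x a, G (x,a) -> a <= q x].

Lemma hahn_banach (q : X -> R) :
  (forall x y, q (x + y) <= q x + q y) ->
  (forall t x, 0 < t -> q (t *: x) = t * q x) -> 0 <= q 0 ->
  exists phi : X -> R, (forall a x y, phi (a *: x + y) = a * phi x + phi y) /\
                       forall x, phi x <= q x.
Proof.
move=> qD qZ q0.
have [A [gA maxA]] : exists A, goodG q A /\ forall B, A `<` B -> ~ goodG q B.
  apply: Zorn_bigcup => F FP Ftot.
  have common : forall G1 G2, F G1 -> F G2 ->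
      exists G, [/\ F G, G1 `<=` G & G2 `<=` G].
    move=> G1 G2 F1 F2; case: (Ftot _ _ F1 F2) => sub.
    - by exists G2; split.
    - by exists G1; split.
  split.
  - move=> x a b [G1 F1 G1a] [G2 F2 G2b].
    have [G [FG s1 s2]] := common _ _ F1 F2.
    by case: (FP _ FG) => fu _ _; apply: (fu x); [apply: s1|apply: s2].
  - move=> t x a y b [G1 F1 G1a] [G2 F2 G2b].
    have [G [FG s1 s2]] := common _ _ F1 F2.
    exists G => //.
    by case: (FP _ FG) => _ li _; apply: li; [apply: s1|apply: s2].
  - move=> x a [G FG Ga].
    by case: (FP _ FG) => _ _ dm; apply: dm.
case: gA => fuA liA dmA.
have A00 : A (0, 0).
  apply: contrapT => nA.
  have nA' : forall z, ~ A z.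
    move=> [x a] Axa; apply: nA.
    by have := liA (-1) x a x a Axa Axa; rewrite scaleN1r addNr mulN1r addNr.
  apply: (maxA [set (0 : X, 0 : R)]).
    split; first by move=> z /nA'.
    by move=> /(_ (0, 0) erefl).
  split.
  - by move=> x a b [-> ->] [->].
  - by move=> t x a y b [-> ->] [-> ->]; rewrite scaler0 add0r mulr0 add0r.
  - by move=> x a [-> ->].
have tot : forall x, exists a, A (x, a).
  move=> v; apply: contrapT => hv.
  pose E := [set r | exists x a, A (x,a) /\ r = a - q (x - v)].
  have bnd : forall x a y b, A (x,a) -> A (y,b) -> a - q (x - v) <= q (y + v) - b.
    move=> x a y b Axa Ayb.
    have := liA 1 x a y b Axa Ayb; rewrite scale1r mul1r => Axy.
    have h1 := dmA _ _ Axy.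
    have h2 := qD (x - v) (y + v).
    have e : x - v + (y + v) = x + y by rewrite addrACA addNr addr0.
    rewrite e in h2; lra.
  have E0 : E !=set0 by exists (0 - q (0 - v)), 0, 0.
  have Eub : has_ubound E.
    by exists (q (0 + v) - 0) => r [x [a [Axa ->]]]; apply: bnd.
  pose c := sup E.
  have cle : forall y b, A (y,b) -> c <= q (y + v) - b.
    by move=> y b Ayb; apply: ge_sup => // r [x [a [Axa ->]]]; apply: bnd.
  have gec : forall x a, A (x,a) -> a - q (x - v) <= c.
    by move=> x a Axa; apply: ub_le_sup => //; exists x, a.
  pose B := [set z | exists x a t, A (x,a) /\ z = (x + t *: v, a + t * c)].
  apply: (maxA B).
    split.
    - by move=> [x a] Axa; exists x, a, 0; rewrite scale0r mul0r !addr0.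
    - move=> sub; apply: hv; exists c.
      by apply: sub; exists 0, 0, 1; rewrite scale1r mul1r !add0r.
  have inv_dom : forall x a s, A (x,a) -> A (s *: x, s * a).
    by move=> x a s Axa; have := liA s x a 0 0 Axa A00; rewrite !addr0.
  split.
  - move=> x a1 a2 [x1 [b1 [t1 [A1 [e1 ->]]]]] [x2 [b2 [t2 [A2 [e2 ->]]]]].
    have [t12|t12] := eqVneq t1 t2.
      subst t2; move: e2; rewrite e1 => /addIr ex; subst x2.
      by rewrite (fuA _ _ _ A1 A2).
    exfalso; apply: hv.
    have A21 := liA (-1) x1 b1 x2 b2 A1 A2.
    have := inv_dom _ _ ((t1 - t2)^-1) A21.
    have -> : (t1 - t2)^-1 *: ((-1) *: x1 + x2) = v.
      have ee : (-1) *: x1 + x2 = (t1 - t2) *: v.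
        rewrite scaleN1r scalerBl.
        have -> : x2 = x1 + t1 *: v - t2 *: v by rewrite -e1 e2 addrK.
        by rewrite -addrA addKr.
      by rewrite ee scalerA mulVf ?scale1r // subr_eq0.
    by move=> h; eexists; exact: h.
  - move=> s x a y b [x1 [a1 [t1 [A1 [-> ->]]]]] [x2 [a2 [t2 [A2 [-> ->]]]]].
    exists (s *: x1 + x2), (s * a1 + a2), (s * t1 + t2); split; first exact: liA.
    congr pair.
      by rewrite scalerDr scalerA scalerDl addrACA.
    by rewrite mulrDr mulrDl mulrA addrACA.
  - move=> x a [x1 [a1 [t [A1 [-> ->]]]]].
    have [t0|t0|->] := ltgtP t 0; last first.
    + by rewrite scale0r mul0r !addr0; apply: dmA.
    + have := cle _ _ (inv_dom _ _ (t^-1) A1).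
      have := qZ t (t^-1 *: x1 + v) t0.
      rewrite scalerDr scalerA mulfV ?gt_eqF // scale1r => ->.
      set Q := q _ => h.
      have := ler_wpM2l (ltW t0) h.
      by rewrite mulrBr mulrA mulfV ?gt_eqF // mul1r; lra.
    + have s0 : 0 < - t by rewrite oppr_gt0.
      have := gec _ _ (inv_dom _ _ ((- t)^-1) A1).
      have := qZ (- t) ((- t)^-1 *: x1 - v) s0.
      rewrite scalerDr scalerA mulfV ?gt_eqF // scale1r scalerN scaleNr opprK => eq.
      rewrite eq; set Q := q _ => h.
      have := ler_wpM2l (ltW s0) h.
      by rewrite mulrBr mulrA mulfV ?gt_eqF // mul1r; lra.
have [phi hphi] := choice tot.
exists phi; split; last by move=> x; apply: dmA.
move=> a x y; apply: (fuA (a *: x + y)); first exact: hphi.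
exact: liA.
Qed.



Lemma lin_zero (phi : X -> R) : (forall a x y, phi (a *: x + y) = a * phi x + phi y) ->
  phi 0 = 0.
Proof.
move=> lin; have := lin 1 0 0; rewrite scale1r addr0 mul1r => h.
lra.
Qed.

Lemma lin_sub (phi : X -> R) : (forall a x y, phi (a *: x + y) = a * phi x + phi y) ->
  forall x y, phi (x - y) = phi x - phi y.
Proof.
by move=> lin x y; have := lin (-1) y x; rewrite scaleN1r mulN1r addrC [in RHS]addrC.
Qed.

Lemma separation (S : set X) (p0 : X) (r : R) : 0 < r -> convex_set_of S ->
  (forall s, S s -> r <= `|s - p0|) ->
  exists phi : X -> R, [/\ forall a x y, phi (a *: x + y) = a * phi x + phi y,
     forall x, `|phi x| <= `|x| & forall s, S s -> phi p0 + r / 2 <= phi s].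
Proof.
move=> r0 cS Sr.
case: (pselect (S !=set0)) => [[s0 Ss0]|S0]; last first.
  exists (fun _ => 0); split => //.
  - by move=> *; rewrite mulr0 addr0.
  - by move=> x; rewrite normr0.
  - by move=> s Ss; exfalso; apply: S0; exists s.
pose Q (x : X) := [set y | exists t s, [/\ 0 <= t, S s &
                     y = `|x + t *: (s - p0)| - t * (r / 2)]].
pose q x := inf (Q x).
have Qn x : Q x !=set0.
  by exists (`|x + 0 *: (s0 - p0)| - 0 * (r/2)), 0, s0.
have Qlb x : lbound (Q x) (- `|x|).
  move=> y [t [s [t0 Ss ->]]].
  have h1 : t * r <= t * `|s - p0| by rewrite ler_wpM2l // Sr.
  have h2 : `|t *: (s - p0)| = t * `|s - p0| by rewrite normrZ ger0_norm.
  have h3 : `|t *: (s - p0)| <= `|x + t *: (s - p0)| + `|x|.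
    by rewrite (le_trans _ (ler_normB _ _)) // addrAC subrr add0r.
  have h4 : 0 <= t * r by rewrite mulr_ge0 // ltW.
  lra.
have q_le x y : Q x y -> q x <= y.
  by move=> Qy; apply: ge_inf => //; exists (- `|x|); apply: Qlb.
have q_ge x b : (forall y, Q x y -> b <= y) -> b <= q x.
  by move=> h; apply: lb_le_inf.
have q_norm x : q x <= `|x|.
  by apply: (q_le); exists 0, s0; split => //; rewrite scale0r addr0 mul0r subr0.
have q0 : 0 <= q 0.
  apply: (q_ge) => y [t [s [t0 Ss ->]]].
  have h1 : t * r <= t * `|s - p0| by rewrite ler_wpM2l // Sr.
  have h4 : 0 <= t * r by rewrite mulr_ge0 // ltW.
  rewrite add0r normrZ ger0_norm //; lra.
have qD x y : q (x + y) <= q x + q y.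
  have core : forall e1 e2, Q x e1 -> Q y e2 -> q (x + y) <= e1 + e2.
    move=> e1 e2 [t1 [s1 [t10 Ss1 ->]]] [t2 [s2 [t20 Ss2 ->]]].
    have [T0|T0] := eqVneq (t1 + t2) 0.
      have t1z : t1 = 0 by move/eqP: T0 => T0; lra.
      have t2z : t2 = 0 by move/eqP: T0 => T0; lra.
      rewrite t1z t2z !scale0r !addr0 !mul0r !subr0.
      exact: le_trans (q_norm _) (ler_normD _ _).
    have Tp : 0 < t1 + t2 by rewrite lt_def T0 /=; apply: addr_ge0.
    set T := t1 + t2 in T0 Tp *.
    have l0 : 0 <= t1 / T by apply: divr_ge0 => //; apply: ltW.
    have l1 : t1 / T <= 1 by rewrite ler_pdivrMr // mul1r lerDl.
    have eT : 1 - t1 / T = t2 / T.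
      by apply: (mulfI T0); rewrite mulrBr mulr1 ![T * (_ / T)]mulrC !divfK // /T; lra.
    have := cS _ _ _ Ss1 Ss2 l0 l1; rewrite eT => Ss.
    apply: le_trans (q_le (x + y) _ _) _.
      exists T, ((t1 / T) *: s1 + (t2 / T) *: s2); split; [exact: ltW | exact: Ss | reflexivity].
    have -> : T *: ((t1 / T) *: s1 + (t2 / T) *: s2 - p0) =
              t1 *: (s1 - p0) + t2 *: (s2 - p0).
      rewrite scalerBr scalerDr !scalerA ![T * (_ / T)]mulrC !divfK //.
      by rewrite !scalerBr /T scalerDl opprD addrACA.
    have : `|x + y + (t1 *: (s1 - p0) + t2 *: (s2 - p0))| <=
           `|x + t1 *: (s1 - p0)| + `|y + t2 *: (s2 - p0)|.
      by rewrite addrACA ler_normD.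
    rewrite /T; lra.
  have h1 : forall e2, Q y e2 -> q (x + y) - e2 <= q x.
    by move=> e2 Qe2; apply: (q_ge) => e1 Qe1; have := core _ _ Qe1 Qe2; lra.
  have : q (x + y) - q x <= q y.
    by apply: (q_ge) => e2 Qe2; have := h1 _ Qe2; lra.
  lra.
have qZ k x : 0 < k -> q (k *: x) = k * q x.
  move=> k0; apply/eqP; rewrite eq_le; apply/andP; split.
  - rewrite -ler_pdivrMl //; apply: (q_ge) => e [t [s [t0 Ss ->]]].
    rewrite ler_pdivrMl //.
    apply: (q_le); exists (k * t), s; split => //; first by rewrite mulr_ge0 // ltW.
    rewrite -scalerA -scalerDr normrZ gtr0_norm // mulrBr mulrA //.
  - apply: (q_ge) => e [t [s [t0 Ss ->]]].
    have -> : `|k *: x + t *: (s - p0)| - t * (r / 2) =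
              k * (`|x + (t / k) *: (s - p0)| - (t / k) * (r / 2)).
      have kn0 : k != 0 by rewrite gt_eqF.
      have e1 : t *: (s - p0) = k *: ((t / k) *: (s - p0)).
        by rewrite scalerA [k * (t / k)]mulrC divfK.
      have e2 : t * (r/2) = k * ((t / k) * (r/2)).
        by rewrite mulrA [k * (t / k)]mulrC divfK.
      by rewrite e1 e2 -scalerDr normrZ gtr0_norm // mulrBr.
    rewrite ler_pM2l //; apply: (q_le); exists (t / k), s; split => //.
    by apply: divr_ge0 => //; apply: ltW.
have [phi [lin phiq]] := hahn_banach q qD qZ q0.
exists phi; split => //.
- move=> x; rewrite ler_norml; apply/andP; split; last exact: le_trans (phiq x) (q_norm x).
  have := le_trans (phiq (- x)) (q_norm (- x)).
  rewrite normrN -[- x]add0r -[0 - x]/(0 - x) lin_sub // lin_zero //; lra.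
- move=> s Ss.
  have : phi (p0 - s) <= - (r / 2).
    apply: le_trans (phiq _) _; apply: (q_le); exists 1, s; split => //.
    by rewrite scale1r addrA subrK subrr normr0 mul1r sub0r.
  rewrite lin_sub //; lra.
Qed.
End S0.

Section S1. Context {R : realType} {X : normedModType R}.

Lemma closure_approx (A : set X) x : closure A x ->
  forall e, 0 < e -> exists y, A y /\ `|x - y| < e.
Proof.
move=> cl e e0.
have [y [Ay]] := cl (ball x e) (nbhsx_ballx _ _ e0).
by rewrite -ball_normE /ball_ /= => h; exists y.
Qed.

Lemma approx_closure (A : set X) x :
  (forall e, 0 < e -> exists y, A y /\ `|x - y| < e) -> closure A x.
Proof.
move=> h B /nbhs_ballP [e e0 sB].
have [y [Ay xy]] := h e e0; exists y; split => //; apply: sB.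
by rewrite -ball_normE /ball_ /=.
Qed.

Lemma closed_by_dist (S : set X) :
  (forall p, ~ S p -> exists2 r, 0 < r & forall s, S s -> r <= `|s - p|) ->
  closed S.
Proof.
move=> h p clp; apply: contrapT => Sp.
have [r r0 hr] := h p Sp.
have [y [Sy py]] := closure_approx _ _ clp _ r0.
by have := hr y Sy; rewrite distrC leNgt py.
Qed.

Lemma dist_of_closed (S : set X) p : closed S -> ~ S p ->
  exists2 r, 0 < r & forall s, S s -> r <= `|s - p|.
Proof.
move=> cS Sp; apply: contrapT => hn.
apply: Sp; apply: cS; apply: approx_closure => e e0.
apply: contrapT => hne; apply: hn; exists e => // s Ss.
rewrite leNgt; apply/negP => lt; apply: hne; exists s; split => //.
by rewrite distrC.
Qed.

Lemma closed_normball (a : X) r : closed [set z | `|a - z| <= r].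
Proof.
apply: closed_by_dist => p /negP; rewrite -ltNge => rp.
exists (`|a - p| - r); first by rewrite subr_gt0.
move=> s /= hs.
have : `|a - p| <= `|a - s| + `|s - p|.
  by rewrite (le_trans _ (ler_normD _ _)) // addrA subrK.
lra.
Qed.

Lemma lip_continuous (phi : X -> R) :
  (forall a x y, phi (a *: x + y) = a * phi x + phi y) ->
  (forall x, `|phi x| <= `|x|) -> continuous phi.
Proof.
move=> lin bd x; apply/cvgrPdist_lt => e e0.
near=> y.
have -> : phi x - phi y = phi (x - y).
  by have := lin (-1) y x; rewrite scaleN1r mulN1r addrC [in RHS]addrC => ->.
apply: le_lt_trans (bd _) _.
near: y.
have := nbhsx_ballx x e e0.
apply: filterS => y; by rewrite -ball_normE /ball_ /=.
Unshelve. all: by end_near.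
Qed.


Lemma weak_open_slab (P : Prop) (phi : X -> R) p e :
  (P -> dual_functional phi) -> weak_open [set y | P /\ `|phi y - phi p| < e].
Proof.
move=> dphi x [hP hx].
exists [:: phi], (e - `|phi x - phi p|); split.
- by move=> f; rewrite inE => /eqP ->; apply: dphi.
- by rewrite subr_gt0.
- move=> y /= hy; split => //.
  have := hy phi (mem_head _ _).
  have : `|phi y - phi p| <= `|phi y - phi x| + `|phi x - phi p|.
    by rewrite (le_trans _ (ler_normD _ _)) // addrA subrK.
  lra.
Qed.

Lemma closed_convex_weak_open (S : set X) :
  closed S -> convex_set_of S -> weak_open (~` S).
Proof.
move=> cS cvS x nSx.
have [r r0 hr] := dist_of_closed _ _ cS nSx.
have [phi [lin bd sp]] := separation _ _ _ r0 cvS hr.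
exists [:: phi], (r / 2); split.
- move=> f; rewrite inE => /eqP ->; split => //; exact: lip_continuous.
- by rewrite divr_gt0.
- move=> y /= hy Sy.
  have := hy phi (mem_head _ _); have := sp y Sy.
  rewrite ltr_norml; lra.
Qed.

Lemma fin_min (A : Type) (s : seq A) (g : A -> R) (P : A -> Prop) :
  (forall i, P i -> 0 < g i) ->
  exists2 d, 0 < d & forall i, List.In i s -> P i -> d <= g i.
Proof.
move=> gp; elim: s => [|a s [d d0 hd]]; first by exists 1.
case: (pselect (P a)) => Pa.
- exists (Num.min d (g a)); first by rewrite lt_min d0 gp.
  move=> i /= [<-|ins] Pi; first by rewrite ge_min lexx orbT.
  by rewrite ge_min hd.
- exists d => // i /= [<-|ins] Pi //; exact: hd.
Qed.

Lemma wc_closed (C : set X) : weakly_compact C -> closed C.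
Proof.
move=> wC; apply: closed_by_dist => p nCp.
have hsep : forall c, exists phi : X -> R, C c ->
   [/\ forall a x y, phi (a *: x + y) = a * phi x + phi y,
     forall x, `|phi x| <= `|x| & phi p + `|c - p| / 2 <= phi c].
  move=> c; case: (pselect (C c)) => Cc; last by exists (fun _ => 0).
  have cp : 0 < `|c - p|.
    by rewrite normr_gt0 subr_eq0; apply/eqP => cp; apply: nCp; rewrite -cp.
  have cv1 : convex_set_of [set c].
    by move=> x y t -> -> _ _; rewrite -scalerDl subrKC scale1r.
  have [phi [lin bd sp]] := separation _ p _ cp cv1 ltac:(by move=> s ->).
  by exists phi => _; split => //; apply: sp.
have [Phi hPhi] := choice hsep.
pose U c := [set y | C c /\ `|Phi c y - Phi c c| < `|c - p| / 4].
have cpos : forall c, C c -> 0 < `|c - p| / 4.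
  move=> c Cc; rewrite divr_gt0 // normr_gt0 subr_eq0.
  by apply/eqP => cp; apply: nCp; rewrite -cp.
have wU : forall c, weak_open (U c).
  move=> c; apply: weak_open_slab => Cc.
  by case: (hPhi c Cc) => lin bd _; split => //; apply: lip_continuous.
have cov : C `<=` \bigcup_i U i.
  move=> x Cx; exists x => //; split => //.
  by rewrite subrr normr0; apply: cpos.
have [s hs] := wC X U wU cov.
have [d d0 hd] := fin_min _ s _ _ cpos.
exists d => // y Cy.
have [i ins [Ci hi]] := hs y Cy.
case: (hPhi i Ci) => lin bd sp.
have h1 := hd i ins Ci.
have h2 : `|Phi i y - Phi i p| <= `|y - p| by rewrite -lin_sub.
move: hi; rewrite ltr_norml => /andP [hi1 hi2].
have h3 : Phi i y - Phi i p <= `|Phi i y - Phi i p| by apply: ler_norm.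
lra.
Qed.

Lemma In_pmap (I : Type) (s : seq (option I)) i :
  List.In (Some i) s -> List.In i (pmap id s).
Proof.
elim: s => [//|[a|] s IH] /=.
- by move=> [[->]|h]; [left | right; apply: IH].
- by move=> [//|h]; apply: IH.
Qed.

Lemma wc_subset (K C : set X) : weakly_compact K -> C `<=` K ->
  weak_open (~` C) -> weakly_compact C.
Proof.
move=> wK CK wC I U wU cov.
pose U' (o : option I) := if o is Some i then U i else ~` C.
have wU' : forall o, weak_open (U' o) by case.
have cov' : K `<=` \bigcup_o U' o.
  move=> x Kx; case: (pselect (C x)) => Cx.
  - by have [i _ Ui] := cov x Cx; exists (Some i).
  - by exists None.
have [s hs] := wK _ U' wU' cov'.
exists (pmap id s) => x Cx.
have [[i|] ins hi] := hs x (CK x Cx).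
- by exists i => //; apply: In_pmap.
- by exfalso; apply: hi.
Qed.

End S1.

Section S2. Context {R : realType} {X : normedModType R}.

Lemma elem_le_sup (E : set R) b e : (forall e, E e -> e <= b) -> E e -> e <= sup E.
Proof. by move=> hb Ee; apply: ub_le_sup => //; exists b. Qed.

Lemma sup_ge0 (E : set R) : (forall e, E e -> 0 <= e) -> 0 <= sup E.
Proof.
move=> h; case: (pselect (has_sup E)) => [[[e Ee] [b hb]]|hs].
- by apply: le_trans (h e Ee) _; apply: ub_le_sup => //; exists b.
- by rewrite sup_out.
Qed.

Lemma le_of_inv (a b : R) : (forall k : nat, a <= b + k.+1%:R^-1) -> a <= b.
Proof.
move=> h; rewrite leNgt; apply/negP => /ltr_add_invr [k hk].
by have := h k; rewrite leNgt hk.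
Qed.

Definition hull (S : set X) :=
  [set z | forall W, closed W -> convex_set_of W -> S `<=` W -> W z].

Lemma hull_sub S : S `<=` hull S.
Proof. by move=> x Sx W _ _ SW; apply: SW. Qed.

Lemma hull_min S W : closed W -> convex_set_of W -> S `<=` W -> hull S `<=` W.
Proof. by move=> cW cvW SW z hz; apply: hz. Qed.

Lemma hull_mono S1 S2 : S1 `<=` S2 -> hull S1 `<=` hull S2.
Proof. by move=> s12 z hz W cW cvW SW; apply: hz => // x /s12 /SW. Qed.

Lemma hull_convex S : convex_set_of (hull S).
Proof. by move=> x y t hx hy t0 t1 W cW cvW SW; exact: (cvW _ _ _ (hx W cW cvW SW) (hy W cW cvW SW)). Qed.

Lemma hull_closed S : closed (hull S).
Proof.
move=> z clz W cW cvW SW; apply: (cW).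
exact: (closureS (hull_min _ _ cW cvW SW) clz).
Qed.

Lemma ball_convex (a : X) r : convex_set_of [set z | `|a - z| <= r].
Proof.
move=> x y t /= hx hy t0 t1.
have -> : a - (t *: x + (1 - t) *: y) = t *: (a - x) + (1 - t) *: (a - y).
  by rewrite !scalerBr addrACA -scalerDl subrKC scale1r opprD.
apply: le_trans (ler_normD _ _) _.
rewrite !normrZ !ger0_norm ?subr_ge0 //.
have t1' : 0 <= 1 - t by rewrite subr_ge0.
have := ler_wpM2l t0 hx; have := ler_wpM2l t1' hy.
lra.
Qed.

Lemma In_le_max (s : seq nat) i : List.In i s -> (i <= foldr maxn 0 s)%N.
Proof.
elim: s => [//|a s IH] /= [->|h]; first by rewrite leq_maxl.
by rewrite (leq_trans (IH h)) // leq_maxr.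
Qed.

Lemma dir1 (C : set X) (T : X -> X) :
  @weak_normal_structure R X -> weakly_compact C -> convex_set_of C -> C !=set0 ->
  T @` C `<=` C -> orbitally_Kannan C T -> diminishes_radius_of_orbits C T ->
  exists x, [/\ C x, T x = x & forall y, C y -> T y = y -> y = x].
Proof.
move=> wns wC cvC [c0 Cc0] TC kan dim.
pose f x := rad x (orbit T x).
have kanf : forall x y, C x -> C y -> `|T x - T y| <= (f x + f y) / 2 := kan.
have dimf : forall x, C x -> f (T x) <= f x := dim.
have Tin : forall x, C x -> C (T x) by move=> x Cx; apply: TC; exists x.
have iterC : forall n x, C x -> C (iter n T x).
  by elim=> [//|n IH] x Cx /=; apply: Tin; apply: IH.
have f_iter : forall n x, C x -> f (iter n T x) <= f x.
  elim=> [//|n IH] x Cx /=.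
  exact: le_trans (dimf _ (iterC n x Cx)) (IH x Cx).
have f_ge0 : forall x, 0 <= f x.
  by move=> x; apply: sup_ge0 => e [w _ <-]; exact: normr_ge0.
have f_bound : forall x b, (forall n, `|x - iter n T x| <= b) -> f x <= b.
  move=> x b hb; apply: ge_sup; first by exists `|x - x|, x => //; exists 0%N.
  by move=> e [w [n _ <-] <-]; apply: hb.
pose lam := inf [set f x | x in C].
have lam_le : forall x, C x -> lam <= f x.
  move=> x Cx; apply: ge_inf; last by exists x.
  by exists 0 => e [y _ <-]; apply: f_ge0.
have lam_ge0 : 0 <= lam.
  apply: lb_le_inf; first by exists (f c0), c0.
  by move=> e [y _ <-]; apply: f_ge0.
pose D (e : R) := [set x | C x /\ f x <= lam + e].
have Dn : forall e, 0 < e -> exists x, D e x.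
  move=> e e0.
  have ne : [set f x | x in C] !=set0 by exists (f c0), c0.
  have lt : lam < lam + e by rewrite ltrDl.
  have [y [x Cx <-] hy] := inf_lt ne lt.
  by exists x; split => //; apply: ltW.
pose eps (k : nat) : R := k.+1%:R^-1.
have eps0 : forall k, 0 < eps k by move=> k; rewrite invr_gt0.
have epsdec : forall m n, (m <= n)%N -> eps n <= eps m.
  by move=> m n mn; rewrite /eps lef_pV2 ?posrE // ler_nat.
pose K (k : nat) := hull (T @` D (eps k)).
have Kdec : forall m n, (m <= n)%N -> K n `<=` K m.
  move=> m n mn; apply: hull_mono => _ [x [Cx hx] <-]; exists x => //; split => //.
  by apply: le_trans hx _; rewrite lerD2l; exact: epsdec.
have Kball : forall k w, C w ->
    K k `<=` [set z | `|T w - z| <= (f w + lam + eps k) / 2].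
  move=> k w Cw; apply: hull_min; [exact: closed_normball | exact: ball_convex |].
  move=> _ [x [Cx hx] <-] /=.
  have := kanf w x Cw Cx; lra.
have Kdiam : forall k a b, K k a -> K k b -> `|a - b| <= lam + eps k.
  move=> k a b Ka Kb.
  have s1 : forall x, D (eps k) x -> K k `<=` [set z | `|T x - z| <= lam + eps k].
    move=> x [Cx hx]; apply: hull_min; [exact: closed_normball | exact: ball_convex |].
    move=> _ [x' [Cx' hx'] <-] /=.
    have := kanf x x' Cx Cx'; lra.
  have s2 : K k `<=` [set z | `|a - z| <= lam + eps k].
    apply: hull_min; [exact: closed_normball | exact: ball_convex |].
    move=> _ [x Dx <-] /=; rewrite distrC; exact: s1 x Dx a Ka.
  exact: s2 b Kb.
pose Kinf := [set z | C z /\ forall k, K k z].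
have Kinf0 : exists y, Kinf y.
  apply: contrapT => nK.
  pose U (k : nat) := ~` K k.
  have wU : forall k, weak_open (U k).
    by move=> k; apply: closed_convex_weak_open; [apply: hull_closed | apply: hull_convex].
  have cov : C `<=` \bigcup_k U k.
    move=> x Cx; apply: contrapT => h; apply: nK; exists x; split => // k.
    by apply: contrapT => nk; apply: h; exists k.
  have [s hs] := wC nat U wU cov.
  pose N := foldr maxn 0%N s.
  have [x [Cx hx]] := Dn (eps N) (eps0 N).
  have KTx : K N (T x) by apply: hull_sub; exists x.
  have [i ins Ui] := hs (T x) (Tin x Cx).
  by apply: Ui; apply: (Kdec i N (In_le_max _ _ ins)).
have Kprop : forall y, Kinf y -> f y = lam /\ forall n, `|y - iter n T y| <= lam.
  move=> y [Cy Ky].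
  have h1 : forall n, `|y - iter n T y| <= (f y + lam) / 2.
    case=> [|n].
      by rewrite /= subrr normr0; have := f_ge0 y; lra.
    apply: le_of_inv => k.
    have w := iterC n y Cy.
    have := Kball k _ w y (Ky k); rewrite /= distrC.
    have := f_iter n y Cy; have := eps0 k; rewrite -/(eps k); lra.
  have fy : f y <= lam by have := f_bound y _ h1; lra.
  have e : f y = lam by apply/le_anti/andP; split => //; apply: lam_le.
  by split => // n; have := h1 n; rewrite e; lra.
have Kinv : forall y, Kinf y -> Kinf (T y).
  move=> y Ky; have [e _] := Kprop y Ky; case: Ky => Cy Ky.
  split; first exact: Tin.
  by move=> k; apply: hull_sub; exists y => //; split => //; rewrite e; have := eps0 k; lra.
have Kiter : forall n y, Kinf y -> Kinf (iter n T y).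
  by elim => [//|n IH] y Ky /=; apply: Kinv; apply: IH.
have Kdiaminf : forall a b, Kinf a -> Kinf b -> `|a - b| <= lam.
  move=> a b [_ Ka] [_ Kb]; apply: le_of_inv => k.
  exact: Kdiam k a b (Ka k) (Kb k).
have fix0 : forall x, T x = x -> f x = 0.
  move=> x Tx; have it : forall n, iter n T x = x.
    by elim=> [//|n IH] /=; rewrite IH Tx.
  apply/le_anti/andP; split; last exact: f_ge0.
  by apply: f_bound => n; rewrite it subrr normr0.
have [y0 Ky0] := Kinf0.
have [fy0 hy0] := Kprop y0 Ky0.
have [lam0|lampos] : lam = 0 \/ 0 < lam.
  by case: (eqVneq lam 0) => [->|h]; [left | right; rewrite lt_def h lam_ge0].
  have Ty0 : T y0 = y0.
    by have := hy0 1%N; rewrite lam0 normr_le0 subr_eq0 => /eqP e; exact: esym e.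
  exists y0; split => //; first exact: Ky0.1.
  move=> y Cy Ty; have := kanf y y0 Cy Ky0.1.
  rewrite Ty Ty0 (fix0 y Ty) (fix0 y0 Ty0) addr0 mul0r normr_le0 subr_eq0.
  by move=> /eqP.
exfalso.
have [n hn] : exists n, 0 < `|y0 - iter n T y0|.
  apply: contrapT => h.
  have : f y0 <= 0.
    apply: f_bound => n; rewrite leNgt; apply/negP => hp; apply: h; by exists n.
  lra.
set y1 := iter n T y0 in hn.
have ns : normal_structure C.
  apply: wns => //; exists y0, y1; split; [exact: Ky0.1 | exact: iterC Ky0.1 |].
  by move=> e; move: hn; rewrite e subrr normr0 ltxx.
have cKinf : closed Kinf.
  move=> z clz; split.
    apply: (wc_closed _ wC); exact: (closureS (fun x (h : Kinf x) => h.1) clz).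
  move=> k; apply: (hull_closed _); exact: (closureS (fun x (h : Kinf x) => h.2 k) clz).
have cvKinf : convex_set_of Kinf.
  move=> a b t [Ca Ka] [Cb Kb] t0 t1; split; first exact: cvC.
  by move=> k; exact: (hull_convex _ _ _ _ (Ka k) (Kb k) t0 t1).
have diam_le : diam Kinf <= lam.
  apply: ge_sup; first by exists `|y0 - y0|; exists y0 => //; exists y0.
  by move=> _ [a Ka [b Kb <-]]; apply: Kdiaminf.
have diam_pos : 0 < diam Kinf.
  apply: lt_le_trans hn _; apply: (elem_le_sup _ lam).
    by move=> _ [a Ka [b Kb <-]]; apply: Kdiaminf.
  by exists y0 => //; exists y1 => //; apply: Kiter.
have [z Kz hz] := ns Kinf (fun x h => h.1) cKinf cvKinf diam_pos.
have [fz _] := Kprop z Kz.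
have : f z <= rad z Kinf.
  apply: f_bound => m; apply: (elem_le_sup _ lam).
    by move=> _ [w Kw <-]; apply: Kdiaminf.
  by exists (iter m T z) => //; apply: Kiter.
lra.
Qed.

End S2.

Section S3. Context {R : realType} {X : normedModType R}.

Lemma closure_convex (A : set X) : convex_set_of A -> convex_set_of (closure A).
Proof.
move=> cvA x1 x2 t c1 c2 t0 t1; apply: approx_closure => e e0.
have e2 : 0 < e / 2 by rewrite divr_gt0.
have [y1 [A1 h1]] := closure_approx _ _ c1 _ e2.
have [y2 [A2 h2]] := closure_approx _ _ c2 _ e2.
exists (t *: y1 + (1 - t) *: y2); split; first exact: cvA.
have -> : t *: x1 + (1 - t) *: x2 - (t *: y1 + (1 - t) *: y2) =
          t *: (x1 - y1) + (1 - t) *: (x2 - y2).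
  by rewrite !scalerBr opprD addrACA.
apply: le_lt_trans (ler_normD _ _) _.
rewrite !normrZ !ger0_norm ?subr_ge0 //.
have t1' : 0 <= 1 - t by rewrite subr_ge0.
have := ler_wpM2l t0 (ltW h1); have := ler_wpM2l t1' (ltW h2).
lra.
Qed.

Lemma lt_all_le (d a : R) : (forall g, 0 < g -> d - g < a) -> d <= a.
Proof.
move=> h; rewrite leNgt; apply/negP => ad.
by have := h (d - a); rewrite subr_gt0 => /(_ ad); rewrite opprB addrC subrK ltxx.
Qed.

Lemma small_tail (d g : R) : 0 < g -> exists N, forall n, (N <= n)%N -> d / n.+2%:R < g.
Proof.
move=> g0.
case: (lerP d 0) => d0.
  exists 0%N => n _; apply: le_lt_trans g0; apply: mulr_le0_ge0 => //.
have gd : 0 < g / d by rewrite divr_gt0.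
have [N hN] := ltr_add_invr gd.
exists N => n Nn; rewrite add0r in hN.
have : n.+2%:R^-1 <= N.+1%:R^-1 :> R by rewrite lef_pV2 ?posrE // ler_nat ltnS leqW.
rewrite ltr_pdivlMr // in hN; move=> h.
apply: le_lt_trans hN; rewrite [d * _]mulrC ler_pM2r //.
Qed.

Fixpoint ssum (g : nat -> X -> X) (n : nat) : X :=
  if n is m.+1 then ssum g m + g m (ssum g m) else 0.

Definition conv (P : set X) := [set z | forall W, convex_set_of W -> P `<=` W -> W z].

Lemma conv_sub P : P `<=` conv P.
Proof. by move=> x Px W _ PW; apply: PW. Qed.

Lemma conv_convex P : convex_set_of (conv P).
Proof. by move=> x y t hx hy t0 t1 W cvW PW; exact: (cvW _ _ _ (hx W cvW PW) (hy W cvW PW)). Qed.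

Lemma conv_min P W : convex_set_of W -> P `<=` W -> conv P `<=` W.
Proof. by move=> cvW PW z hz; apply: hz. Qed.

Lemma conv_mono P1 P2 : P1 `<=` P2 -> conv P1 `<=` conv P2.
Proof. by move=> s12 z hz W cvW PW; apply: hz => // x /s12 /PW. Qed.

Lemma dir2 :
  (forall (C : set X) (T : X -> X),
      weakly_compact C -> convex_set_of C -> C !=set0 ->
      T @` C `<=` C ->
      orbitally_Kannan C T -> diminishes_radius_of_orbits C T ->
      exists x, [/\ C x, T x = x & forall y, C y -> T y = y -> y = x]) ->
  @weak_normal_structure R X.
Proof.
move=> H K wK cvK _ K0 K0K cK0 cvK0 dpos.
apply: contrapT => nns.
have diam_rad : forall x, K0 x -> diam K0 <= rad x K0.
  by move=> x Kx; rewrite leNgt; apply/negP => lt; apply: nns; exists x.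
have hsup : has_sup [set `|x - y| | x in K0 & y in K0].
  by apply: contrapT => hs; move: dpos; rewrite /diam sup_out // ltxx.
set d := diam K0 in dpos diam_rad.
have dist_le : forall a b, K0 a -> K0 b -> `|a - b| <= d.
  by move=> a b Ka Kb; apply: (ub_le_sup hsup.2); exists a => //; exists b.
have [z0 K0z0] : exists z, K0 z by case: hsup => [[_ [a Ka _]]] _; exists a.
have far : forall x g, K0 x -> 0 < g -> exists2 z, K0 z & d - g < `|x - z|.
  move=> x g Kx g0.
  have ne : [set `|x - y| | y in K0] !=set0 by exists `|x - x|, x.
  have lt : d - g < rad x K0.
    by apply: lt_le_trans (diam_rad x Kx); rewrite ltrBlDr ltrDl.
  by have [_ [z Kz <-] hz] := sup_gt ne lt; exists z.
have hp : forall xg : X * R, exists z, K0 xg.1 /\ 0 < xg.2 ->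
    K0 z /\ d - xg.2 < `|xg.1 - z|.
  move=> [x g]; case: (pselect (K0 x /\ 0 < g)) => [[Kx g0]|nh]; last first.
    by exists z0 => h; exfalso; apply: nh.
  by have [z Kz hz] := far x g Kx g0; exists z.
have [pick hpick] := choice hp.
pose g (n : nat) (s : X) :=
  if n is m.+1 then pick (n%:R^-1 *: s, d / (n%:R * n.+1%:R)) else z0.
pose zz n := g n (ssum g n).
have ssumS : forall n, ssum g n.+1 = ssum g n + zz n by [].
have comb : forall a b n, K0 a -> K0 b ->
    exists2 w, K0 w & a + n%:R *: b = n.+1%:R *: w.
  move=> a b n Ka Kb.
  have t0 : 0 <= n.+1%:R^-1 :> R by rewrite invr_ge0.
  have t1 : n.+1%:R^-1 <= 1 :> R by rewrite invf_le1 ?ler1n // ltr0n.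
  exists (n.+1%:R^-1 *: a + (1 - n.+1%:R^-1) *: b); first exact: cvK0.
  rewrite scalerDr !scalerA mulfV ?pnatr_eq0 // scale1r mulrBr mulr1.
  by rewrite mulfV ?pnatr_eq0 // -natr1 addrK.
have inv : forall n, K0 (zz n) /\
    (forall i, (i <= n)%N -> exists2 w, K0 w & ssum g n.+1 = zz i + n%:R *: w).
  elim=> [|n [Kzn IH]].
    split; first exact: K0z0.
    move=> i; rewrite leqn0 => /eqP ->; exists z0 => //.
    by rewrite scale0r addr0 ssumS /= add0r.
  have [w0 Kw0 e0] := IH 0%N (leq0n n).
  have [c Kc ec] := comb (zz 0%N) w0 n K0z0 Kw0.
  have hs : ssum g n.+1 = n.+1%:R *: c by rewrite e0 ec.
  set S1 := ssum g n.+1 in hs *.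
  have hpz : K0 (zz n.+1) /\
      d - d / (n.+1%:R * n.+2%:R) < `|n.+1%:R^-1 *: S1 - zz n.+1|.
    apply: (hpick (n.+1%:R^-1 *: S1, d / (n.+1%:R * n.+2%:R))); split.
      by rewrite /= hs scalerA mulVf ?pnatr_eq0 // scale1r.
    by rewrite /= divr_gt0 // mulr_gt0 // ltr0n.
  split; first exact: hpz.1.
  move=> i; rewrite leq_eqVlt => /orP [/eqP ->|lt].
    by exists c => //; rewrite ssumS -/S1 hs addrC.
  have [wi Kwi ei] := IH i lt.
  have [w' Kw' ew'] := comb (zz n.+1) wi n hpz.1 Kwi.
  by exists w' => //; rewrite ssumS ei -addrA [n%:R *: wi + _]addrC ew'.
have Kz : forall n, K0 (zz n) := fun n => (inv n).1.
have farz : forall n, n.+1%:R * d - d / n.+2%:R <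
                      `|ssum g n.+1 - n.+1%:R *: zz n.+1|.
  move=> n.
  have [w0 Kw0 e0] := (inv n).2 0%N (leq0n n).
  have [c Kc ec] := comb (zz 0%N) w0 n K0z0 Kw0.
  have hs : ssum g n.+1 = n.+1%:R *: c by rewrite e0 ec.
  set S1 := ssum g n.+1 in hs *.
  have hpz : K0 (zz n.+1) /\
      d - d / (n.+1%:R * n.+2%:R) < `|n.+1%:R^-1 *: S1 - zz n.+1|.
    apply: (hpick (n.+1%:R^-1 *: S1, d / (n.+1%:R * n.+2%:R))); split.
      by rewrite /= hs scalerA mulVf ?pnatr_eq0 // scale1r.
    by rewrite /= divr_gt0 // mulr_gt0 // ltr0n.
  have e1 : S1 - n.+1%:R *: zz n.+1 =
            n.+1%:R *: (n.+1%:R^-1 *: S1 - zz n.+1).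
    by rewrite scalerBr scalerA mulfV ?pnatr_eq0 // scale1r.
  have n1 : (0 : R) < n.+1%:R by rewrite ltr0n.
  have ef : n.+1%:R * (d / (n.+1%:R * n.+2%:R)) = d / n.+2%:R :> R.
    field; apply/andP; split; apply/negP => /eqP h; have := ler0n R n; lra.
  rewrite e1 normrZ ger0_norm ?ler0n //.
  by have := hpz.2; rewrite -(ltr_pM2l n1) mulrBr ef.
have sepE : forall n y w, K0 w -> ssum g n.+1 = y + n%:R *: w ->
    d - d / n.+2%:R < `|y - zz n.+1|.
  move=> n y w Kw e.
  set z := zz n.+1.
  have ey : ssum g n.+1 - n.+1%:R *: z = (y - z) + n%:R *: (w - z).
    rewrite e -natr1 scalerDl scale1r scalerBr opprD [- (n%:R *: z) + _]addrC.
    by rewrite addrACA.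
  have h1 := farz n; rewrite -/z ey in h1.
  have h2 : `|y - z + n%:R *: (w - z)| <= `|y - z| + n%:R * d.
    apply: le_trans (ler_normD _ _) _; rewrite lerD2l normrZ ger0_norm ?ler0n //.
    by rewrite ler_wpM2l ?ler0n // dist_le //; apply: Kz.
  move: h1; rewrite -natr1 mulrDl mul1r => h.
  have h3 := lt_le_trans h h2.
  rewrite -(ltrD2r (n%:R * d)) (addrC (d - _)) addrA.
  exact: h3.
have cvE : forall n, convex_set_of [set y | exists2 w, K0 w & ssum g n.+1 = y + n%:R *: w].
  move=> n y1 y2 t [w1 Kw1 e1] [w2 Kw2 e2] t0 t1.
  exists (t *: w1 + (1 - t) *: w2); first exact: cvK0.
  have -> : t *: y1 + (1 - t) *: y2 + n%:R *: (t *: w1 + (1 - t) *: w2) =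
            t *: (y1 + n%:R *: w1) + (1 - t) *: (y2 + n%:R *: w2).
    by rewrite !scalerDr !scalerA [n%:R * t]mulrC [n%:R * (1 - t)]mulrC addrACA.
  by rewrite -e1 -e2 -scalerDl subrKC scale1r.
pose A m := conv [set zz i | i in [set i | (i < m)%N]].
have AE : forall m n y, (m <= n.+1)%N -> A m y -> d - d / n.+2%:R < `|y - zz n.+1|.
  move=> m n y mn Ay.
  have : [set y | exists2 w, K0 w & ssum g n.+1 = y + n%:R *: w] y.
    apply: (conv_min _ _ (cvE n) _ _ Ay).
    move=> _ [i im <-]; apply: (inv n).2.
    by rewrite -ltnS (leq_trans im mn).
  by move=> [w Kw e]; apply: sepE Kw e.
pose U := [set y | exists m, A m y].
have Amono : forall m m', (m <= m')%N -> A m `<=` A m'.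
  move=> m m' mm'; apply: conv_mono => _ [i im <-]; exists i => //.
  exact: leq_trans im mm'.
have cvU : convex_set_of U.
  move=> a b t [m1 h1] [m2 h2] t0 t1; exists (maxn m1 m2).
  apply: conv_convex => //; [apply: (Amono m1) h1 | apply: (Amono m2) h2].
    exact: leq_maxl.
  exact: leq_maxr.
have zzU : forall k, U (zz k).
  by move=> k; exists k.+1; exact: (conv_sub _ _ (ex_intro2 _ _ k (ltnSn k) erefl)).
have AK0 : forall m, A m `<=` K0.
  by move=> m; apply: conv_min => // _ [i _ <-]; apply: Kz.
have UK0 : U `<=` K0 by move=> y [m Ay]; exact: AK0 m y Ay.
pose Cs := closure U.
have CsK0 : Cs `<=` K0 by move=> x cx; apply: cK0; exact: (closureS UK0 cx).
have UCs : U `<=` Cs := @subset_closure _ U.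
have zz_neq : forall k n, (k < n)%N -> zz k <> zz n.
  move=> k [//|n] kn e.
  have := AE k.+1 n (zz k) kn (conv_sub _ _ (ex_intro2 _ _ k (ltnSn k) erefl)).
  rewrite e subrr normr0.
  have : d / n.+2%:R <= d.
    by rewrite ler_pdivrMr ?ltr0n // ler_peMr ?ltW // ltr1n.
  move: (d / n.+2%:R) => q; lra.
have zz_inj : injective zz.
  move=> a b e; case: (ltngtP a b) => h //.
    by exfalso; exact: zz_neq h e.
  by exfalso; exact: zz_neq h (esym e).
pose T (x : X) := match pselect (exists k, x = zz k) with
  | left h => zz (sval (cid h)).+1 | right _ => zz 0%N end.
have TZ : forall k, T (zz k) = zz k.+1.
  move=> k; rewrite /T; case: pselect => [h|nh]; last by exfalso; apply: nh; exists k.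
  by case: (cid h) => k' /= e; rewrite -(zz_inj _ _ e).
have TN : forall x, ~ (exists k, x = zz k) -> T x = zz 0%N.
  by move=> x nx; rewrite /T; case: pselect => // h; exfalso; exact: nx h.
have iterZ : forall j k, iter j T (zz k) = zz (k + j)%N.
  by elim=> [|j IH] k /=; [rewrite addn0 | rewrite IH TZ addnS].
have iterN : forall x, ~ (exists k, x = zz k) -> forall j, iter j.+1 T x = zz j.
  move=> x nx; elim=> [|j IH] /=; first exact: TN.
  by move: IH => /= ->; rewrite TZ.
have TCs : forall x, Cs (T x).
  by move=> x; rewrite /T; case: pselect => [h|h]; apply: UCs; apply: zzU.
have iterCs : forall n x, Cs x -> Cs (iter n T x).
  by case=> [//|n] x Cx /=; apply: TCs.
have f_eq : forall x, Cs x -> rad x (orbit T x) = d.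
  move=> x Cx.
  have bnd : forall e, [set `|x - y| | y in orbit T x] e -> e <= d.
    move=> _ [_ [n _ <-] <-]; apply: dist_le; apply: CsK0; [exact: Cx | exact: iterCs].
  apply/le_anti/andP; split.
    by apply: ge_sup => //; exists `|x - x|, x => //; exists 0%N.
  apply: lt_all_le => gam gam0.
  suff [n hn] : exists n, d - gam < `|x - iter n T x|.
    apply: lt_le_trans hn _; rewrite /rad; apply: (elem_le_sup _ d _ bnd).
    by exists (iter n T x) => //; exists n.
  have g2 : 0 < gam / 2 by rewrite divr_gt0.
  have [N hN] := small_tail d _ g2.
  case: (pselect (exists k, x = zz k)) => [[k ->]|nx].
    exists ((maxn k N).+1 - k)%N; rewrite iterZ subnKC; last first.
      by rewrite (leq_trans (leq_maxl k N)).
    have := AE k.+1 (maxn k N) (zz k) _ (conv_sub _ _ (ex_intro2 _ _ k (ltnSn k) erefl)).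
    rewrite ltnS leq_maxl => /(_ isT).
    have := hN (maxn k N) (leq_maxr k N).
    move: (d / _) => q; lra.
  have [y [[m Ay] xy]] := closure_approx _ _ Cx _ g2.
  exists (maxn m N).+2; rewrite iterN //.
  have := AE m (maxn m N) y (leqW (leq_maxl m N)) Ay.
  have := hN (maxn m N) (leq_maxr m N).
  have : `|y - zz (maxn m N).+1| <= `|y - x| + `|x - zz (maxn m N).+1|.
    by rewrite (le_trans _ (ler_normD _ _)) // addrA subrK.
  rewrite distrC in xy; move: (d / _) => q; lra.
have cCs : closed Cs := @closed_closure _ U.
have cvCs : convex_set_of Cs := closure_convex _ cvU.
have := H Cs T.
case.
- apply: (wc_subset _ _ wK (fun x h => K0K x (CsK0 x h))).
  exact: closed_convex_weak_open.
- exact: cvCs.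
- by exists (zz 0%N); apply: UCs; apply: zzU.
- by move=> _ [x _ <-]; exact: TCs.
- move=> x y Cx Cy; rewrite (f_eq x Cx) (f_eq y Cy).
  have := dist_le _ _ (CsK0 _ (TCs x)) (CsK0 _ (TCs y)); lra.
- by move=> x Cx; rewrite (f_eq _ (TCs x)) (f_eq x Cx).
move=> x [Cx Tx _].
case: (pselect (exists k, x = zz k)) => [[k e]|nx].
  move: Tx; rewrite e TZ => /zz_inj h.
  by move/(congr1 (fun m => (m - k)%N)): h; rewrite subSnn subnn.
by apply: (nx); exists 0%N; rewrite -(TN x nx) Tx.
Qed.

End S3.


Theorem theorem4p6 (R : realType) (X : completeNormedModType R) :
  @weak_normal_structure R X <->
  (forall (C : set X) (T : X -> X),
      weakly_compact C -> convex_set_of C -> C !=set0 ->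
      T @` C `<=` C ->
      orbitally_Kannan C T -> diminishes_radius_of_orbits C T ->
      exists x, [/\ C x, T x = x & forall y, C y -> T y = y -> y = x]).
Proof.
split.
- move=> wns C T wC cvC ne TC kan dim.
  exact: (dir1 C T wns wC cvC ne TC kan dim).
- exact: dir2.
Qed.
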